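(* Let $n$ be a positive integer and suppose $c_n<1$. Then for every profinite group $G$ such that $X_n(G)=\{x\in G : x^n=1\}$ has positive Haar measure, there exist an open subgroup $H$ of $G$ and an element $t\in G$ such that every element of the coset $tH$ has order dividing $n$.
   Context: Haar measure means normalized Haar measure. For a group $K$ and an automorphism $\phi$ of $K$ whose order divides $n$, writing $x^\phi$ for the image of $x$, set $X_{n,\phi}(K):=\{x\in K : x x^{\phi} x^{\phi^2}\cdots x^{\phi^{n-1}}=1\}$. Define $$c_n:=\sup\left(\left\{\frac{|X_{n,\phi}(H)|}{|H|} : H \text{ a finite group},\ \phi\in \mathrm{Aut}(H),\ \phi^n=\mathrm{id}\right\}\setminus\{1\}\right).$$ *)

(* Defs.v *)
From HB Require Import structures.
From mathcomp Require Import all_boot all_order all_algebra all_fingroup.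
From mathcomp Require Import all_classical all_reals all_analysis.

Set Implicit Arguments.
Unset Strict Implicit.
Unset Printing Implicit Defensive.

Import Order.TTheory GRing.Theory Num.Theory.

(* A type carrying both a (possibly infinite) group structure and a
   (pointed) topology.  The compatibility and profiniteness conditions are
   stated separately in [profinite_group]. *)
#[short(type="groupTopType")]
HB.structure Definition GroupTop := {G of monoid.Group G & PointedTopological G}.

Local Open Scope classical_set_scope.

Section Profinite.
Variable G : groupTopType.
Local Open Scope group_scope.

Definition topological_group : Prop :=
  continuous (fun p : G * G => p.1 * p.2) /\ continuous (fun x : G => x^-1).

Definition profinite_group : Prop :=
  [/\ topological_group, compact [set: G], hausdorff_space G
    & totally_disconnected [set: G]].

Definition is_subgroup (H : set G) : Prop :=
  [/\ H 1, (forall x y, H x -> H y -> H (x * y)) & (forall x, H x -> H x^-1)].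

Definition open_subgroup (H : set G) : Prop := is_subgroup H /\ open H.

Definition Xn (n : nat) : set G := [set x | x ^+ n = 1].

End Profinite.

Notation borelG G := (g_sigma_algebraType (@open G)).

Local Open Scope ereal_scope.

(* Normalized Haar measure on a compact group: a Borel probability measure,
   left invariant, outer regular on Borel sets and inner regular on open
   sets (i.e. a left-invariant Radon probability measure). *)
Definition normalized_haar_measure (R : realType) (G : groupTopType)
  (mu : measure (borelG G) R) : Prop :=
  [/\ mu [set: borelG G] = 1,
      (forall (g : G) (A : set (borelG G)), measurable A ->
         mu [set (g * x)%g | x in A] = mu A),
      (forall A : set (borelG G), measurable A ->
         mu A = ereal_inf [set mu U | U in [set U : set G | open U /\ A `<=` U]])
    & (forall U : set G, open U ->
         mu U = ereal_sup [set mu K | K in [set K : set G | compact K /\ K `<=` U]])].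

Local Close Scope ereal_scope.

Definition Xnphi (gT : finGroupType) (n : nat) (phi : {perm gT}) : {set gT} :=
  [set x : gT | (\prod_(i < n) (phi ^+ i)%g x)%g == 1%g].

Definition cn_ratios (R : realType) (n : nat) : set R :=
  [set r : R | exists (gT : finGroupType) (phi : {perm gT}),
     [/\ phi \in Aut (setTfor gT), (phi ^+ n)%g = 1%g
       & r = (#|Xnphi n phi|%:R / #|gT|%:R)%R]] `\` [set 1%R].

Definition c_n (R : realType) (n : nat) : R := reals.sup (@cn_ratios R n).

(* Main.v *)
Require Import Defs.
From HB Require Import structures.
From mathcomp Require Import all_boot all_order all_algebra all_fingroup.
From mathcomp Require Import all_classical all_reals all_analysis.
From mathcomp Require Import finmap.
Set Implicit Arguments.
Unset Strict Implicit.
Unset Printing Implicit Defensive.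
Import Order.TTheory GRing.Theory Num.Theory.
Local Open Scope classical_set_scope.


Lemma tdc_zero_dim (R : realType) (T : topologicalType) :
  compact [set: T] -> hausdorff_space T -> totally_disconnected [set: T] ->
  zero_dimensional T.
Proof.
move=> cT hT tdT x y xy.
apply: contrapT => hno.
pose Q := \bigcap_(C in [set C : set T | clopen C /\ C x]) C.
have Qy : Q y.
  move=> C [cC Cx]; apply: contrapT => nCy; apply: hno; exists C; by split.
have Qx : Q x by move=> C [].
have clQ : closed Q by apply: closed_bigI => C [[]].
have nT := compact_normal hT cT.
have /(@normal_openP R) nO := nT.
suff cQ : connected Q.
  have : connected_component [set: T] x y.
    by exists Q => //; split.
  by rewrite tdT // => /= yx; move: xy; rewrite yx eqxx.
move=> B [b Bb] [C oC BQC] [D cD BQD].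
have clB : closed B by rewrite BQD; exact: closedI.
pose Dd := Q `&` ~` C.
have clDd : closed Dd by apply: closedI => //; exact: open_closedC.
have BDd : B `&` Dd = set0.
  by apply/seteqP; split => // z [+ [_ nCz]]; rewrite BQC => -[].
have [U [W [oU oW BU DdW UW]]] := nO B Dd clB clDd BDd.
have QUW : Q `<=` U `|` W.
  move=> z Qz; have [Cz|nCz] := pselect (C z).
    by left; apply: BU; rewrite BQC.
  by right; apply: DdW.
have [C0 [cC0 C0x C0UW]] : exists C0, [/\ clopen C0, C0 x & C0 `<=` U `|` W].
  pose K := ~` (U `|` W).
  have cK : compact K.
    apply: (subclosed_compact _ cT) => //; apply: open_closedC; exact: openU.
  pose F := filter_from [set C : set T | clopen C /\ C x]
                        (fun C0 => [set C' : set T | C' `<=` C0]).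
  have FF : Filter F.
    apply: filter_from_filter; first by exists setT; split => //; exact: clopenT.
    move=> A1 A2 [cA1 A1x] [cA2 A2x]; exists (A1 `&` A2).
      by split; [exact: clopenI | split].
    by move=> C' /= C'12; split => z /C'12 [].
  have /compact_near_coveringP nc := cK.
  have := nc (set T) F (fun C' z => ~ C' z) FF.
  have H1 : forall z, K z -> \forall z' \near z & C' \near F, ~ C' z'.
    move=> z Kz.
    have [C1 [cC1 C1x] nC1z] : exists2 C1, clopen C1 /\ C1 x & ~ C1 z.
      apply: contrapT => hh; apply: Kz; apply: QUW => C1 hC1.
      by apply: contrapT => nz; apply: hh; exists C1.
    exists (~` C1, [set C' : set T | C' `<=` C1]) => /=.
      split.
        apply: open_nbhs_nbhs; split => //.
        by apply: closed_openC; case: cC1.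
      by exists C1 => //.
    by move=> [z' C'] [/= nC1z' C'C1] /C'C1.
  move=> /(_ H1) [C1 [cC1 C1x] hC1].
  exists C1; split => //.
  move=> z C1z; apply: contrapT => nz.
  by have := hC1 C1 (@subset_refl _ C1) z nz.
have clopen_inter (E E' : set T) : open E -> open E' -> E `&` E' = set0 ->
    C0 `<=` E `|` E' -> clopen (C0 `&` E).
  move=> oE oE' EE' C0EE; split; first by apply: openI => //; case: cC0.
  have -> : C0 `&` E = C0 `&` ~` E'.
    apply/seteqP; split => z [C0z Ez]; split => //.
      by move=> E'z; have : (E `&` E') z by []; rewrite EE'.
    by case: (C0EE z C0z).
  apply: closedI; first by case: cC0.
  exact: open_closedC.
have WU : W `&` U = set0 by rewrite setIC.
have [Bx|nBx] := pselect (B x).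
  have := clopen_inter U W oU oW UW C0UW.
  move=> cE; have QU : Q `<=` U.
    move=> z Qz; suff : (C0 `&` U) z by case.
    by apply: Qz; split => //; split => //; exact: BU.
  apply/seteqP; split; first by move=> z; rewrite BQC => -[].
  move=> z Qz; have [Cz|nCz] := pselect (C z); first by rewrite BQC.
  have : (U `&` W) z by split; [exact: QU | apply: DdW].
  by rewrite UW.
have C0WU : C0 `<=` W `|` U by move=> z /C0UW [?|?]; [right|left].
have := clopen_inter W U oW oU WU C0WU.
move=> cE; have QW : Q `<=` W.
  move=> z Qz; suff : (C0 `&` W) z by case.
  apply: Qz; split => //; split => //.
  apply: DdW; split => // Cx; apply: nBx; rewrite BQC; by split.
have : (U `&` W) b by split; [exact: BU | apply: QW; move: Bb; rewrite BQC => -[]].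
by rewrite UW.
Qed.

Section TopGroup.
Variable G : groupTopType.
Local Open Scope group_scope.

Lemma tube_lemma (f : G -> G -> G)
  (hf : continuous (fun p : G * G => f p.1 p.2)) (K : set G)
  (cK : compact K) (U : set G) (oU : open U)
  (h : forall x, K x -> U (f x 1)) :
  exists V : set G, [/\ open V, V 1 & forall x v, K x -> V v -> U (f x v)].
Proof.
have /compact_near_coveringP nc := cK.
have := nc G (nbhs (1:G)) (fun v x => U (f x v)) (@nbhs_filter G 1).
have H1 : forall x : G, K x -> \forall x' \near x & i \near nbhs (1:G), U (f x' i).
  move=> x Kx.
  have hc := hf (x, 1%g).
  have : nbhs (f x 1) U by apply: open_nbhs_nbhs; split => //; apply: h.
  move=> /hc.
  done.
move=> /(_ H1) hn.
rewrite nbhsE /= in hn; case: hn => V [oV V1] VP.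
by exists V; split => // x v Kx Vv; apply: (VP v Vv).
Qed.

Variable hmul : continuous (fun p : G * G => p.1 * p.2).
Variable hinv : continuous (fun x : G => x^-1).

Lemma cont_mul (T : topologicalType) (f g : T -> G) :
  continuous f -> continuous g -> continuous (fun x => f x * g x).
Proof.
move=> cf cg x.
apply: (@continuous2_cvg _ _ _ _ _ _ f g (fun a b => a * b)) => //.
- have H := @hmul (f x, g x). exact H.
- exact: cf.
- exact: cg.
Qed.

Lemma cont_inv (T : topologicalType) (f : T -> G) :
  continuous f -> continuous (fun x => (f x)^-1).
Proof.
move=> cf x; apply: (continuous_comp (cf x)); exact: hinv.
Qed.

Lemma cont_fst : continuous (fun p : G * G => p.1).
Proof. by move=> p; apply: cvg_fst. Qed.
Lemma cont_snd : continuous (fun p : G * G => p.2).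
Proof. by move=> p; apply: cvg_snd. Qed.
Lemma cont_id : continuous (fun x : G => x).
Proof. by move=> x. Qed.
Lemma cont_cst (T : topologicalType) (a : G) : continuous (fun _ : T => a).
Proof. exact: cst_continuous. Qed.

Lemma open_preim_lmul (a : G) (U : set G) : open U -> open [set y | U (a * y)].
Proof.
move=> oU; have /continuousP := cont_mul (@cont_cst G a) cont_id.
by move=> /(_ U oU).
Qed.

Lemma cont_expn n : continuous (fun x : G => x ^+ n).
Proof.
elim: n => [|n IH]; first exact: cont_cst.
have -> : (fun x : G => x ^+ n.+1) = (fun x => x * x ^+ n).
  by apply: funext => x; rewrite expgS.
exact: cont_mul cont_id IH.
Qed.


Variable R : realType.
Variable cG : compact [set: G].
Variable hG : hausdorff_space G.
Variable tdG : totally_disconnected [set: G].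

Lemma clopen_nbhd (V : set G) (x : G) : open V -> V x ->
  exists C, [/\ clopen C, C x & C `<=` V].
Proof.
move=> oV Vx.
have zd := @tdc_zero_dim R G cG hG tdG.
have := @zero_dimensional_cvg G x hG zd cG.
move=> /(_ V) []; first by apply: open_nbhs_nbhs.
by move=> C [Cx cC] CV; exists C.
Qed.

Lemma open_subgroup_in (V : set G) : open V -> V 1 ->
  exists H, [/\ open H, H `<=` V & is_subgroup H].
Proof.
move=> oV V1.
have [C [[oC clC] C1 CV]] := clopen_nbhd oV V1.
have cC : compact C by apply: (subclosed_compact _ cG).
have [W [oW W1 CW]] := @tube_lemma (fun x v => x * v) hmul C cC C oC
   (fun x Cx => eq_ind_r C Cx (mulg1 x)).
pose W' := W `&` [set v | W v^-1].
have oW' : open W'.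
  apply: openI => //.
  by have /continuousP := hinv; move=> /(_ W oW).
pose H := [set g | forall c, C c -> C (c * g) /\ C (c * g^-1)].
have W'H : W' `<=` H.
  by move=> w [Ww Wiw] c Cc; split; apply: CW.
have sH : is_subgroup H.
  split.
  - by move=> c Cc; rewrite invg1 mulg1.
  - move=> g h Hg Hh c Cc; split.
      by rewrite mulgA; apply: (Hh _ (Hg _ Cc).1).1.
    by rewrite invgM mulgA; apply: (Hg _ (Hh _ Cc).2).2.
  - by move=> g Hg c Cc; rewrite invgK; split; apply (Hg c Cc).
exists H; split => //.
- rewrite openE => h Hh.
  rewrite /interior nbhsE /=.
  exists [set y | W' (h^-1 * y)].
    split; last by rewrite /= mulVg; split => //=; rewrite invg1.
    exact: open_preim_lmul.
  move=> y W'y; have -> : y = h * (h^-1 * y) by rewrite mulgA mulgV mul1g.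
  by case: sH => _ + _; apply => //; apply: W'H.
- move=> g Hg; apply: CV.
  by have := (Hg 1 C1).1; rewrite mul1g.
Qed.

Lemma open_normal_in (V : set G) : open V -> V 1 ->
  exists N, [/\ open N, N `<=` V, is_subgroup N &
    forall y g, N g -> N (y^-1 * g * y)].
Proof.
move=> oV V1.
have [H [oH HV [H1 HM HI]]] := open_subgroup_in oV V1.
have cf : continuous (fun p : G * G => p.1^-1 * p.2 * p.1).
  apply: cont_mul; last exact: cont_fst.
  apply: cont_mul; last exact: cont_snd.
  exact: cont_inv cont_fst.
have [W [oW W1 HW]] := @tube_lemma (fun x v => x^-1 * v * x) cf setT cG H oH
   (fun x _ => eq_ind_r H H1 (eq_trans (f_equal (fun z => z * x) (mulg1 x^-1)) (mulVg x))).
pose N := [set g | forall x, H (x^-1 * g * x)].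
have WN : W `<=` N by move=> w Ww x; apply: HW.
have conjM (x g h : G) : x^-1 * (g * h) * x = (x^-1 * g * x) * (x^-1 * h * x).
  by rewrite !mulgA mulgK.
have sN : is_subgroup N.
  split.
  - by move=> x; rewrite mulg1 mulVg.
  - by move=> g h Ng Nh x; rewrite conjM; apply: HM.
  - move=> g Ng x.
    have -> : x^-1 * g^-1 * x = (x^-1 * g * x)^-1 by rewrite !invgM invgK mulgA.
    exact: HI.
exists N; split => //.
- rewrite openE => h Nh.
  rewrite /interior nbhsE /=.
  exists [set y | W (h^-1 * y)].
    split; last by rewrite /= mulVg.
    exact: open_preim_lmul.
  move=> y Wy; have -> : y = h * (h^-1 * y) by rewrite mulgA mulgV mul1g.
  by case: sN => _ + _; apply => //; apply: WN.
- by move=> g Ng; apply: HV; have := Ng 1; rewrite invg1 mul1g mulg1.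
- move=> y g Ng x.
  have -> : x^-1 * (y^-1 * g * y) * x = (y * x)^-1 * g * (y * x).
    by rewrite invgM !mulgA.
  exact: Ng.
Qed.

End TopGroup.


Section Cosets.
Variable G : groupTopType.
Local Open Scope group_scope.
Variable hmul : continuous (fun p : G * G => p.1 * p.2).
Variable cG : compact [set: G].

Lemma coset_reps (N : set G) : open N -> is_subgroup N ->
  exists s : seq G,
    (forall g, exists i : 'I_(size s), N ((nth 1 s i)^-1 * g)) /\
    (forall i j : 'I_(size s), N ((nth 1 s i)^-1 * nth 1 s j) -> i = j).
Proof.
move=> oN [N1 NM NI].
have NC g h : N (g^-1 * h) -> N (h^-1 * g).
  by move=> /NI; rewrite invgM invgK.
have NT g h k : N (g^-1 * h) -> N (h^-1 * k) -> N (g^-1 * k).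
  by move=> a b; have := NM _ _ a b; rewrite mulgA mulgK.
have := cG; rewrite compact_cover => /(_ G setT (fun a => [set y | N (a^-1 * y)])).
case.
- move=> a _.
  exact: open_preim_lmul.
- by move=> g _; exists g => //=; rewrite mulVg.
move=> D' _ cov.
pose s0 := enum_fset D'.
pose cr g := nth 1 s0 (find (fun a => `[< N (a^-1 * g) >]) s0).
have c1 g : N ((cr g)^-1 * g).
  have [a aD' /= Na] := cov g (I : setT g).
  have hs : has (fun a => `[< N (a^-1 * g) >]) s0.
    by apply/hasP; exists a => //; apply/asboolP.
  by have := nth_find 1 hs; move/asboolP.
have c2 g h : N (g^-1 * h) -> cr g = cr h.
  move=> Ngh; rewrite /cr; congr (nth _ _ (find _ _)).
  apply: funext => a; apply/asboolP/asboolP => Na.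
    exact: NT Na Ngh.
  exact: NT Na (NC _ _ Ngh).
have c3 g : cr (cr g) = cr g by apply: c2; apply: c1.
pose s := undup (map cr s0).
have us : uniq s by apply: undup_uniq.
exists s; split.
- move=> g.
  have [a aD' /= Na] := cov g (I : setT g).
  have crs : cr g \in s.
    by rewrite mem_undup -(c2 a g Na); apply/mapP; exists a.
  have hi : (index (cr g) s < size s)%N by rewrite index_mem.
  by exists (Ordinal hi) => /=; rewrite nth_index.
- move=> i j Nij; apply/val_inj => /=.
  have inS (k : 'I_(size s)) : exists a, nth 1 s k = cr a.
    have : nth 1 s k \in s by apply: mem_nth.
    by rewrite mem_undup => /mapP [a _ ->]; exists a.
  have [a ea] := inS i; have [b eb] := inS j.
  have eq : nth 1 s i = nth 1 s j.
    by rewrite ea eb -(c3 a) -(c3 b); apply: c2; rewrite -ea -eb.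
  by apply/eqP; rewrite -(nth_uniq 1 (ltn_ord i) (ltn_ord j) us) eq.
Qed.
End Cosets.


Section FiniteStep.
Variable G : groupTopType.
Local Open Scope group_scope.
Variables (M N : set G) (t : G) (n : nat).
Hypothesis sM : is_subgroup M.
Hypothesis nM : forall y g, M g -> M (y^-1 * g * y).
Hypothesis sN : is_subgroup N.
Hypothesis nN : forall y g, N g -> N (y^-1 * g * y).
Hypothesis MN : M `<=` N.
Hypothesis tn : t ^+ n = 1.
Variable r : seq G.
Hypothesis rcov : forall g, exists i : 'I_(size r), M ((nth 1 r i)^-1 * g).
Hypothesis runiq : forall i j : 'I_(size r), M ((nth 1 r i)^-1 * nth 1 r j) -> i = j.

Let k := size r.
Let rr (i : 'I_k) := nth 1 r i.

Let M1 : M 1. Proof. by case: sM. Qed.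
Let MM g h : M g -> M h -> M (g * h). Proof. by case: sM => _ + _; apply. Qed.
Let MI g : M g -> M g^-1. Proof. by case: sM => _ _; apply. Qed.
Let N1 : N 1. Proof. by case: sN. Qed.
Let NM g h : N g -> N h -> N (g * h). Proof. by case: sN => _ + _; apply. Qed.
Let NI g : N g -> N g^-1. Proof. by case: sN => _ _; apply. Qed.

Definition pi_fun (g : G) (i : 'I_k) : 'I_k :=
  odflt i [pick j : 'I_k | `[< M ((rr j)^-1 * g^-1 * rr i) >] ].

Lemma pi_spec g i : M ((rr (pi_fun g i))^-1 * g^-1 * rr i).
Proof.
rewrite /pi_fun; case: pickP => [j /asboolP //|].
have [j hj] := rcov (g^-1 * rr i).
by move=> /(_ j) /asboolP; rewrite mulgA in hj.
Qed.

Lemma pi_uniq g i j : M ((rr j)^-1 * g^-1 * rr i) -> pi_fun g i = j.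
Proof.
move=> hj; apply: runiq.
have := MM (pi_spec g i) (MI hj).
by rewrite !invgM !invgK !mulgA mulgK mulgVK.
Qed.

Lemma pi_inj g : injective (pi_fun g).
Proof.
move=> i i' e; apply: runiq.
have h1 := pi_spec g i; have h2 := pi_spec g i'; rewrite e in h1.
have := MM (MI h1) h2.
by rewrite !invgM !invgK !mulgA mulgK mulgK.
Qed.

Definition pi (g : G) : {perm 'I_k} := perm (@pi_inj g).

Lemma piE g i : pi g i = pi_fun g i. Proof. by rewrite permE. Qed.

Lemma piM g h : pi (g * h) = pi g * pi h.
Proof.
apply/permP => i; rewrite permM !piE; apply: pi_uniq.
have := MM (pi_spec h (pi_fun g i)) (pi_spec g i).
by rewrite invgM !mulgA mulgK.
Qed.


Lemma pi1 : pi 1 = 1.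
Proof.
apply/permP => i; rewrite piE perm1; apply: pi_uniq.
by rewrite invg1 mulg1 mulVg.
Qed.

Lemma piV g : pi g^-1 = (pi g)^-1.
Proof.
by apply: (mulgI (pi g)); rewrite -piM mulgV mulgV pi1.
Qed.

Lemma pi_kerP g : pi g = 1 <-> M g.
Proof.
split => [h1|Mg].
  have [i _] := rcov 1.
  have := pi_spec g i; rewrite -piE h1 perm1 => h.
  have := nM (rr i)^-1 h.
  rewrite invgK !mulgA mulgV mul1g mulgK => /MI.
  by rewrite invgK.
apply/permP => i; rewrite piE perm1; apply: pi_uniq.
have := nM (rr i) (MI Mg). move=> hh. exact hh.
Qed.

Lemma pi_eqP g h : pi g = pi h <-> M (g^-1 * h).
Proof.
rewrite -pi_kerP piM piV; split => [->|e]; first by rewrite mulVg.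
by apply: (mulgI (pi g)^-1); rewrite e mulVg.
Qed.

Lemma pi_expn g m : pi (g ^+ m) = (pi g) ^+ m.
Proof.
elim: m => [|m IH]; first by rewrite !expg0 pi1.
by rewrite !expgS piM IH.
Qed.

Definition Aset : {set 'I_k} := [set i : 'I_k | `[< N (rr i) >] ].

Definition Q : {set {perm 'I_k}} := [set pi (rr i) | i in Aset].

Lemma rep_of g : exists i : 'I_k, M ((rr i)^-1 * g).
Proof. exact: rcov. Qed.

Lemma QP p : p \in Q <-> exists g, N g /\ pi g = p.
Proof.
split.
  by move=> /imsetP [i]; rewrite inE => /asboolP Ni ->; exists (rr i).
move=> [g [Ng <-]].
have [i hi] := rep_of g.
apply/imsetP; exists i.
  rewrite inE; apply/asboolP.
  have -> : rr i = g * ((rr i)^-1 * g)^-1 by rewrite invgM invgK mulgA mulgV mul1g.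
  by apply: NM => //; apply/NI/MN.
by apply/pi_eqP; rewrite -[g^-1 * _]invgK invgM invgK; apply: MI.
Qed.

Lemma Q_group_set : group_set Q.
Proof.
apply/group_setP; split.
  by apply/QP; exists 1; split => //; exact: pi1.
move=> p q /QP [g [Ng <-]] /QP [h [Nh <-]].
by apply/QP; exists (g * h); split; [exact: NM | exact: piM].
Qed.

Definition QG : {group {perm 'I_k}} := Group Q_group_set.

Lemma card_Q : #|Q| = #|Aset|.
Proof.
rewrite card_in_imset // => i j _ _ /pi_eqP e.
by apply: runiq.
Qed.


Definition tau := pi t.

Lemma conj_Q q : q \in QG -> q ^ tau^-1 \in QG.
Proof.
move=> /QP [g [Ng <-]]; apply/QP; exists (t * g * t^-1); split.
  by have := nN t^-1 Ng; rewrite invgK.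
by rewrite /conjg invgK /tau !piM piV mulgA.
Qed.

Definition gT := subg_of QG.

Definition phi_fun (x : gT) : gT := subg QG (sgval x ^ tau^-1).

Lemma sgval_phi_fun x : sgval (phi_fun x) = sgval x ^ tau^-1.
Proof. by rewrite /phi_fun subgK // conj_Q // subgP. Qed.

Lemma phi_inj : injective phi_fun.
Proof.
move=> x y e; apply: subg_inj; apply: (@conjg_inj _ tau^-1).
by rewrite -!sgval_phi_fun e.
Qed.

Definition phi : {perm gT} := perm phi_inj.

Lemma phiE x : phi x = phi_fun x. Proof. by rewrite permE. Qed.

Lemma phi_Aut : phi \in Aut (setTfor gT).
Proof.
rewrite inE; apply/andP; split.
  by apply/fintype.subsetP => x _; rewrite inE.
apply/morphicP => x y _ _; rewrite !phiE; apply: subg_inj.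
by rewrite sgvalM ?inE // !sgval_phi_fun sgvalM ?inE // conjMg.
Qed.

Lemma phiX m x : sgval ((phi ^+ m) x) = sgval x ^ (tau^-1) ^+ m.
Proof.
elim: m x => [|m IH] x; first by rewrite !expg0 perm1 conjg1.
by rewrite expgSr permM phiE sgval_phi_fun IH expgSr conjgM.
Qed.

Lemma tau_n : tau ^+ n = 1.
Proof. by rewrite /tau -pi_expn tn pi1. Qed.

Lemma phi_n : phi ^+ n = 1.
Proof.
apply/permP => x; rewrite perm1; apply: subg_inj.
by rewrite phiX expgVn tau_n invg1 conjg1.
Qed.


Lemma pi_power g m :
  pi ((g * t) ^+ m) = (\prod_(i < m) (pi g) ^ (tau^-1) ^+ i) * tau ^+ m.
Proof.
elim: m => [|m IH]; first by rewrite !expg0 big_ord0 pi1 mulg1.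
rewrite expgSr !piM IH big_ord_recr /= /conjg expVgn invgK.
by rewrite [tau ^+ m.+1]expgSr !mulgA mulgVK.
Qed.

Lemma sgval_prod m (F : 'I_m -> gT) :
  sgval (\prod_(i < m) F i) = \prod_(i < m) sgval (F i).
Proof.
elim: m F => [|m IH] F; first by rewrite !big_ord0.
by rewrite !big_ord_recr /= IH.
Qed.

Lemma X_iff g : N g ->
  (subg QG (pi g) \in Xnphi n phi) = `[< M ((g * t) ^+ n) >].
Proof.
move=> Ng.
have piQ : pi g \in QG by apply/QP; exists g.
rewrite inE; apply/idP/idP.
  move=> /eqP /(congr1 sgval); rewrite sgval_prod.
  under eq_bigr => i _ do rewrite phiX subgK //.
  move=> h; apply/asboolP/pi_kerP; rewrite pi_power tau_n mulg1 h.
  by [].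
move=> /asboolP /pi_kerP; rewrite pi_power tau_n mulg1 => h.
apply/eqP; apply: subg_inj; rewrite sgval_prod.
under eq_bigr => i _ do rewrite phiX subgK //.
by rewrite h.
Qed.


Lemma card_gT : #|gT| = #|Aset|.
Proof.
rewrite -card_Q -cardsT.
by rewrite -(card_isog (isog_subg QG)).
Qed.

Definition Sset : {set 'I_k} := [set i in Aset | `[< M ((rr i * t) ^+ n) >] ].

Lemma card_X : #|Xnphi n phi| = #|Sset|.
Proof.
have -> : Xnphi n phi = [set subg QG (pi (rr i)) | i in Sset]%SET.
  apply/setP => x; apply/idP/imsetP.
    move=> hx.
    have : sgval x \in QG by apply: subgP.
    move=> /imsetP [i Ai e].
    have ex : x = subg QG (pi (rr i)) by rewrite -e sgvalK.
    exists i => //.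
    rewrite inE Ai /=; rewrite ex X_iff in hx => //.
    by move: Ai; rewrite inE => /asboolP.
  move=> [i]; rewrite inE => /andP [Ai Mi] ->.
  by rewrite X_iff //; move: Ai; rewrite inE => /asboolP.
rewrite card_in_imset // => i j Si Sj e.
have : pi (rr i) = pi (rr j).
  have Qi : pi (rr i) \in QG by apply/imsetP; exists i => //; move: Si; rewrite inE => /andP [].
  have Qj : pi (rr j) \in QG by apply/imsetP; exists j => //; move: Sj; rewrite inE => /andP [].
  by have := congr1 sgval e; rewrite !subgK.
by move=> /pi_eqP; apply: runiq.
Qed.


Lemma A_mem g (i : 'I_k) : N g -> M ((rr i)^-1 * g) -> i \in Aset.
Proof.
move=> Ng hi; rewrite inE; apply/asboolP.
have -> : rr i = g * ((rr i)^-1 * g)^-1 by rewrite invgM invgK mulgA mulgV mul1g.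
by apply: NM => //; apply/NI/MN.
Qed.

Lemma S_mem g (i : 'I_k) : N g -> M ((rr i)^-1 * g) -> M ((g * t) ^+ n) ->
  i \in Sset.
Proof.
move=> Ng hi Mg; rewrite inE (A_mem Ng hi) /=; apply/asboolP.
apply/pi_kerP; move/pi_kerP: Mg.
have e : pi g = pi (rr i).
  by apply/pi_eqP; rewrite -[g^-1 * _]invgK invgM invgK; apply: MI.
by rewrite !pi_power e.
Qed.

Lemma cn_ratios_ub (R : realType) : ubound (@cn_ratios R n) 1%R.
Proof.
move=> x [[gT' [phi' [_ _ ->]]] _].
have h0 : (0 < #|gT'|)%N by apply/card_gt0P; exists 1%g.
rewrite ler_pdivrMr ?ltr0n // mul1r ler_nat.
exact: max_card.
Qed.

Lemma finite_step (R : realType) (c : R) : (c_n R n <= c)%R ->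
  (c * #|Aset|%:R < #|Sset|%:R)%R -> forall g, N g -> M ((g * t) ^+ n).
Proof.
move=> hc hcnt.
have SA : Sset \subset Aset by apply/fintype.subsetP => i; rewrite inE => /andP [].
have SAc : (#|Sset| <= #|Aset|)%N by apply: subset_leq_card.
have Apos : (0 < #|Aset|)%N.
  rewrite lt0n; apply/negP => /eqP A0.
  move: hcnt SAc; rewrite A0 leqn0 => + /eqP S0.
  by rewrite S0 mulr0n mulr0 ltxx.
pose ratio : R := (#|Xnphi n phi|%:R / #|gT|%:R)%R.
have ratio_gt : (c < ratio)%R.
  by rewrite /ratio card_X card_gT ltr_pdivlMr ?ltr0n.
have eqSA : Sset = Aset.
  apply/eqP; rewrite eqEcard SA /=.
  have [r1|rn1] := eqVneq ratio 1%R.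
    move: r1; rewrite /ratio card_X card_gT => /(congr1 (fun x => x * #|Aset|%:R)%R).
    rewrite mulfVK ?pnatr_eq0 -?lt0n // mul1r => /eqP.
    by rewrite eqr_nat => /eqP ->.
  exfalso.
  have inR : @cn_ratios R n ratio.
    split; last by move=> /= /eqP; rewrite (negbTE rn1).
    exists gT, phi; split => //; [exact: phi_Aut | exact: phi_n].
  have : (ratio <= c_n R n)%R.
    apply: ub_le_sup => //; exists 1%R; exact: cn_ratios_ub.
  by move=> /le_trans /(_ hc); rewrite leNgt ratio_gt.
move=> g Ng.
have [i hi] := rep_of g.
have Ai : i \in Aset.
  rewrite inE; apply/asboolP.
  have -> : rr i = g * ((rr i)^-1 * g)^-1 by rewrite invgM invgK mulgA mulgV mul1g.
  by apply: NM => //; apply/NI/MN.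
move: Ai; rewrite -eqSA inE => /andP [_ /asboolP Mi].
apply/pi_kerP; move/pi_kerP: Mi.
have e : pi g = pi (rr i).
  by apply/pi_eqP; rewrite -[g^-1 * _]invgK invgM invgK; apply: MI.
by rewrite !pi_power e.
Qed.

End FiniteStep.


Section Meas.
Variables (R : realType) (G : groupTopType) (mu : measure (borelG G) R).
Hypothesis hmu : normalized_haar_measure mu.

Lemma meas_open (A : set G) : open A -> measurable (A : set (borelG G)).
Proof. by move=> oA; apply: sub_sigma_algebra. Qed.

Lemma mu_le1 (A : set G) : measurable (A : set (borelG G)) -> (mu A <= 1)%E.
Proof.
move=> mA; case: hmu => <- _ _ _.
apply: le_measure; [exact: mem_set | exact: mem_set | by []].
Qed.

Lemma mu_fin (A : set G) : measurable (A : set (borelG G)) ->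
  mu A = (fine (mu A))%:E.
Proof.
move=> mA; rewrite fineK // ge0_fin_numE //.
by apply: (le_lt_trans (mu_le1 mA)); rewrite ltry.
Qed.

Lemma mu_coset (g : G) (A : set G) : measurable (A : set (borelG G)) ->
  mu [set y | A (g^-1 * y)%g] = mu A.
Proof.
move=> mA; case: hmu => _ hinv _ _.
rewrite -(hinv g A mA); congr (mu _).
apply/seteqP; split => y.
  by move=> Ay; exists (g^-1 * y)%g => //; rewrite mulgA mulgV mul1g.
by move=> [x Ax <-]; rewrite /= mulgA mulVg mul1g.
Qed.

End Meas.

Lemma in_bigsetU (T : Type) k (P : pred 'I_k) (F : 'I_k -> set T) y :
  (\big[setU/set0]_(i < k | P i) F i) y <-> exists i, P i /\ F i y.
Proof.
rewrite -bigcup_seq_cond; split => [[i /andP [_ Pi] Fi]|[i [Pi Fi]]].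
  by exists i.
by exists i => //; apply/andP; split => //; rewrite mem_index_enum.
Qed.


Unset Implicit Arguments.
Set Strict Implicit.

Theorem proposition2p6 (R : realType) (n : nat) (n_pos : (0 < n)%N)
  (hcn : (c_n R n < 1)%R)
  (G : groupTopType) (hG : profinite_group G)
  (mu : measure (borelG G) R)
  (hmu : normalized_haar_measure mu)
  (hX : (0 < mu (@Xn G n))%E) :
  exists (H : set G) (t : G),
    open_subgroup H /\ (forall h, H h -> ((t * h) ^+ n)%g = 1%g).
Proof.
case: hG => [[hmul hinv] cG hH tdG].
pose c : R := Num.max (c_n R n) (2^-1)%R.
have hc : (c_n R n <= c)%R by rewrite le_max lexx.
have c1 : (c < 1)%R by rewrite gt_max hcn /= invf_lt1 // ltr1n.
have c0 : (0 < c)%R by rewrite lt_max invr_gt0 ltr0n orbT.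
pose X := @Xn G n.
have clX : closed X.
  have -> : X = (fun x : G => (x ^+ n)%g) @^-1` [set 1%g] by [].
  apply: closed_comp; first by move=> x _; apply: cont_expn.
  by apply: accessible_closed_set1; apply: hausdorff_accessible.
have mX : measurable (X : set (borelG G)).
  rewrite -[X]setCK; apply: measurableC; apply: meas_open.
  exact: closed_openC.
pose m (A : set G) := fine (mu A).
have mE (A : set G) : measurable (A : set (borelG G)) -> mu A = (m A)%:E.
  exact: mu_fin.
have mX0 : (0 < m X)%R by rewrite -lte_fin -mE.
have [U [oU XU] hUX] : exists2 U : set G, open U /\ X `<=` U & (c * m U < m X)%R.
  case: hmu => _ _ hout _.
  have := hout X mX.
  have lt1 : (mu X < (m X / c)%:E)%E.
    rewrite mE // lte_fin ltr_pdivlMr //.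
    by rewrite gtr_pMr.
  move=> e; rewrite e in lt1.
  have [y [U [oU XU] <-] hy] := ereal_inf_lt lt1.
  exists U => //.
  rewrite mE in hy; last exact: meas_open.
  by rewrite lte_fin ltr_pdivlMr // mulrC in hy.
have cX : compact X by apply: (subclosed_compact _ cG).
have [V [oV V1 XVU]] := @tube_lemma G (fun x v => (x * v)%g) hmul X cX U oU
   (fun x Xx => eq_ind_r U (XU x Xx) (mulg1 x)).
have [N [oN NV sN nN]] := open_normal_in hmul hinv R cG hH tdG oV V1.
have [N1 NM NI] := sN.
have [s [scov suniq]] := coset_reps hmul cG oN sN.
pose k := size s.
pose si (i : 'I_k) := nth 1%g s i.
pose B (i : 'I_k) := [set y | N ((si i)^-1 * y)%g].
pose A (i : 'I_k) := X `&` B i.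
have mB i : measurable (B i : set (borelG G)) by apply: meas_open; apply: open_preim_lmul.
have mA i : measurable (A i : set (borelG G)) by apply: measurableI.
have mN : measurable (N : set (borelG G)) by apply: meas_open.
have mBN i : m (B i) = m N by rewrite /m mu_coset.
have Ntrans a b y : N (a^-1 * y)%g -> N (b^-1 * y)%g -> N (a^-1 * b)%g.
  move=> h1 h2; have := NM _ _ h1 (NI _ h2).
  by rewrite invgM invgK mulgA mulgK.
have trB : trivIset setT B.
  move=> i j _ _ [y [h1 h2]]; apply: suniq; exact: Ntrans h1 h2.
have trA : trivIset setT A.
  move=> i j _ _ [y [[_ h1] [_ h2]]]; apply: suniq; exact: Ntrans h1 h2.
have mN0 : (0 <= m N)%R by apply: fine_ge0.
have [i hi] : exists i, (c * m N < m (A i))%R.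
  apply: contrapT => hno.
  have hle i : (m (A i) <= c * m N)%R.
    by rewrite leNgt; apply/negP => h; apply: hno; exists i.
  pose J : pred 'I_k := fun i => `[< A i !=set0 >].
  have sumX : m X = (\sum_(i < k) m (A i))%R.
    have e : mu X = mu (\big[setU/set0]_(i < k) A i).
      congr (mu _); apply/seteqP; split => y.
        move=> Xy; apply/in_bigsetU; have [i hi] := scov y; by exists i.
      by move=> /in_bigsetU [i [_ []]].
    rewrite measure_bigsetU_ord // in e.
    apply: (@EFin_inj R); rewrite -mE // e -sumEFin; apply: eq_bigr => i _; exact: mE.
  have sumJ : m X = (\sum_(i < k | J i) m (A i))%R.
    rewrite sumX (bigID J) /= [X in (_ + X)%R]big1 ?addr0 // => j nJj.
    have -> : A j = set0.
      apply: contrapT => /eqP /set0P ne; move/negP: nJj; apply; exact/asboolP.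
    by rewrite /m measure0.
  have le1 : (m X <= c * (#|J|%:R * m N))%R.
    rewrite sumJ (le_trans (ler_sum _ (fun i _ => hle i))) //.
    by rewrite sumr_const mulrCA mulr_natl.
  have le2 : (#|J|%:R * m N <= m U)%R.
    have e : mu (\big[setU/set0]_(i < k | J i) B i) = (\sum_(i < k | J i) mu (B i))%E
      := @measure_bigsetU_ord_cond _ _ _ mu k J B (fun i _ => mB i)
      (sub_trivIset (fun _ _ => I) trB).
    have sub : \big[setU/set0]_(i < k | J i) B i `<=` U.
      move=> z /in_bigsetU [j [Jj Bz]].
      move/asboolP: Jj => [y [Xy By]].
      have -> : z = (y * (y^-1 * z))%g by rewrite mulgA mulgV mul1g.
      apply: XVU => //; apply: NV.
      by have := NM _ _ (NI _ By) Bz; rewrite invgM invgK mulgA mulgK.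
    have : (mu (\big[setU/set0]_(i < k | J i) B i) <= mu U)%E
      := @le_measure _ _ _ mu _ _ (mem_set (bigsetU_measurable _ (fun i _ => mB i)))
      (mem_set (meas_open oU)) sub.
    rewrite e mE; last exact: meas_open.
    rewrite (eq_bigr (fun i => (m N)%:E)); last first.
      by move=> j _; rewrite mE // mBN.
    by rewrite sumEFin lee_fin sumr_const mulr_natl.
  have : (m X < m X)%R.
    apply: (le_lt_trans le1); apply: (le_lt_trans _ hUX).
    by rewrite ler_wpM2l // ltW.
  by rewrite ltxx.
have [t [Xt Bt]] : A i !=set0.
  apply/set0P/negP => /eqP A0; move: hi; rewrite A0 /m measure0 /=.
  by rewrite ltNge mulr_ge0 // ltW.
have ht : (t ^+ n)%g = 1%g := Xt.
pose tN := [set y | N (t^-1 * y)%g].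
have etN : X `&` tN = A i.
  apply/seteqP; split => y [Xy Ny]; split => //.
    by rewrite /B /=; have := NM _ _ Bt Ny; rewrite mulgA mulgK.
  by have := NM _ _ (NI _ Bt) Ny; rewrite invgM invgK mulgA mulgK.
have mtN : measurable (tN : set (borelG G)) by apply: meas_open; apply: open_preim_lmul.
have hXtN : (c * m N < m (X `&` tN))%R by rewrite etN.
exists N, t; split; first by split.
move=> h Nh; apply: contrapT => hne.
pose x := (t * h)%g.
pose V' := ~` [set (x ^+ n)%g] `&` N.
have oV' : open V'.
  apply: openI => //; apply: closed_openC.
  by apply: accessible_closed_set1; apply: hausdorff_accessible.
have V'1 : V' 1%g by split => // /= e; apply: hne; rewrite -/x -e.
have [M [oM MV' sM nM]] := open_normal_in hmul hinv R cG hH tdG oV' V'1.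
have MN : M `<=` N by move=> z /MV' [].
have [M1 MM MI] := sM.
have [r [rcov runiq]] := coset_reps hmul cG oM sM.
pose kr := size r.
pose ri (j : 'I_kr) := nth 1%g r j.
have mM : measurable (M : set (borelG G)) by apply: meas_open.
have mM0 : (0 <= m M)%R by apply: fine_ge0.
have hcount : (c * #|Aset N r|%:R < #|Sset M N t n r|%:R)%R.
  pose FA (j : 'I_kr) := [set y | M ((ri j)^-1 * y)%g].
  pose FS (j : 'I_kr) := [set y | M ((ri j * t)^-1 * y)%g].
  have mFA j : measurable (FA j : set (borelG G)).
    by apply: meas_open; apply: open_preim_lmul.
  have mFS j : measurable (FS j : set (borelG G)).
    by apply: meas_open; apply: open_preim_lmul.
  have muFA j : mu (FA j) = (m M)%:E by rewrite mu_coset // mE.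
  have muFS j : mu (FS j) = (m M)%:E by rewrite mu_coset // mE.
  have Mtrans a b y : M (a^-1 * y)%g -> M (b^-1 * y)%g -> M (a^-1 * b)%g.
    move=> h1 h2; have := MM _ _ h1 (MI _ h2).
    by rewrite invgM invgK mulgA mulgK.
  have trFA : trivIset setT FA.
    move=> a b _ _ [y [h1 h2]]; apply: runiq; exact: Mtrans h1 h2.
  have trFS : trivIset setT FS.
    move=> a b _ _ [y [h1 h2]]; apply: runiq.
    have := nM (t^-1)%g _ (Mtrans _ _ _ h1 h2).
    by rewrite invgK invgM !mulgA mulgV mul1g mulgK.
  have hA : (#|Aset N r|%:R * m M <= m N)%R.
    have e : mu (\big[setU/set0]_(j < kr | j \in Aset N r) FA j) =
        (\sum_(j < kr | j \in Aset N r) mu (FA j))%E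
      := @measure_bigsetU_ord_cond _ _ _ mu kr (fun j => j \in Aset N r) FA
           (fun j _ => mFA j) (sub_trivIset (fun _ _ => I) trFA).
    have sub : \big[setU/set0]_(j < kr | j \in Aset N r) FA j `<=` N.
      move=> y /in_bigsetU [j [Aj Fy]].
      move: Aj; rewrite inE => /asboolP Nj.
      have -> : y = (ri j * ((ri j)^-1 * y))%g by rewrite mulgA mulgV mul1g.
      by apply: NM => //; apply: MN.
    have : (mu (\big[setU/set0]_(j < kr | j \in Aset N r) FA j) <= mu N)%E
      := @le_measure _ _ _ mu _ _ (mem_set (bigsetU_measurable _ (fun j _ => mFA j)))
      (mem_set mN) sub.
    rewrite e mE //.
    rewrite (eq_bigr (fun j => (m M)%:E)); last by move=> j _; rewrite muFA.
    by rewrite sumEFin lee_fin sumr_const mulr_natl.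
  have hS : (m (X `&` tN) <= #|Sset M N t n r|%:R * m M)%R.
    have e : mu (\big[setU/set0]_(j < kr | j \in Sset M N t n r) FS j) =
        (\sum_(j < kr | j \in Sset M N t n r) mu (FS j))%E
      := @measure_bigsetU_ord_cond _ _ _ mu kr (fun j => j \in Sset M N t n r) FS
           (fun j _ => mFS j) (sub_trivIset (fun _ _ => I) trFS).
    have sub : X `&` tN `<=` \big[setU/set0]_(j < kr | j \in Sset M N t n r) FS j.
      move=> y [Xy Ny]; apply/in_bigsetU.
      pose g := (y * t^-1)%g.
      have Ng' : N g.
        by have := nN (t^-1)%g _ Ny; rewrite invgK !mulgA mulgV mul1g.
      have [j hj] := rcov g.
      have gt : (g * t)%g = y by rewrite mulgVK.
      exists j; split.
        apply: (S_mem sM nM sN MN rcov runiq Ng' hj).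
        by rewrite gt; have -> : (y ^+ n)%g = 1%g := Xy.
      rewrite /FS /= -gt invgM.
      have := nM t _ hj.
      by rewrite !mulgA.
    have : (mu (X `&` tN) <= mu (\big[setU/set0]_(j < kr | j \in Sset M N t n r) FS j))%E
      := @le_measure _ _ _ mu _ _ (mem_set (measurableI _ _ mX mtN))
      (mem_set (bigsetU_measurable _ (fun j _ => mFS j))) sub.
    rewrite e mE; last exact: measurableI.
    rewrite (eq_bigr (fun j => (m M)%:E)); last by move=> j _; rewrite muFS.
    by rewrite sumEFin lee_fin sumr_const mulr_natl.
  have h1 : (c * (#|Aset N r|%:R * m M) < #|Sset M N t n r|%:R * m M)%R.
    apply: (le_lt_trans _ (lt_le_trans hXtN hS)).
    by rewrite ler_wpM2l // ltW.
  rewrite ltNge; apply/negP => hle.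
  have : (#|Sset M N t n r|%:R * m M <= c * (#|Aset N r|%:R * m M))%R.
    by rewrite mulrA ler_wpM2r.
  by rewrite leNgt h1.
have key := finite_step sM nM sN nN MN ht rcov runiq hc hcount.
have Ng : N (t * h * t^-1)%g by have := nN (t^-1)%g h Nh; rewrite invgK.
have := key _ Ng; rewrite mulgVK -/x => Mx.
by case: (MV' _ Mx) => /= /(_ erefl).
Qed.
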